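(* Let $G$ be a connected block graph on $n$ vertices with set of cut vertices $V_c(G)$ and $k$ an integer with $2\le k\le n$. Then $$SW_k(G)=\sum_{v\in V_c(G)} B_k(v) + (k-1)\binom{n}{k}.$$
   Context: A block graph is a graph in which every block (maximal connected induced subgraph without cut vertices) is a clique. For connected $G$ and $S\subseteq V(G)$, the Steiner distance $d(S)$ is the minimum number of edges of a connected subgraph whose vertex set contains $S$; such a minimum subgraph is a tree, called a Steiner tree for $S$; vertices of $S$ are its terminal vertices and the other vertices its inner vertices. $SW_k(G)=\sum_{S\subseteq V(G),|S|=k} d(S)$. The $k$-Steiner betweenness centrality of $v$ is $$B_k(v)=\sum_{A\subseteq V(G)\setminus\{v\},\ |A|=k}\frac{\sigma_A(v)}{\sigma_A},$$ where $\sigma_A$ is the number of Steiner trees for $A$ and $\sigma_A(v)$ is the number of those containing $v$ as an inner vertex. *)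

(* Defs.v *)
From mathcomp Require Import all_boot all_order all_algebra.
Set Implicit Arguments. Unset Strict Implicit. Unset Printing Implicit Defensive.

Section BlockGraphs.
Variables (T : finType) (e : rel T).

Definition simple_graph : Prop := symmetric e /\ irreflexive e.

Definition graph_connected : Prop := forall x y : T, connect e x y.

(* the subgraph induced by S is connected (empty set counts as connected) *)
Definition conn_in (S : {set T}) : bool :=
  [forall x in S, forall y in S,
     connect [rel a b | e a b && (a \in S) && (b \in S)] x y].

Definition no_cut_in (S : {set T}) : bool :=
  [forall v in S, conn_in (S :\ v)].

Definition is_block (B : {set T}) : bool :=
  maxset (fun S : {set T} => conn_in S && no_cut_in S) B.

Definition is_clique (B : {set T}) : bool :=
  [forall x in B, forall y in B, (x != y) ==> e x y].

Definition block_graph : Prop := forall B : {set T}, is_block B -> is_clique B.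

Definition cut_vertex (v : T) : bool :=
  [exists x, exists y, [&& x != v, y != v &
     ~~ connect [rel a b | e a b && (a != v) && (b != v)] x y]].

(* a subgraph is a pair (W, F): vertex set W, edge set F of 2-element sets *)
Definition subgraph := ({set T} * {set {set T}})%type.

Definition conn_subgraph (p : subgraph) : bool :=
  [forall f in p.2, exists x in p.1, exists y in p.1, e x y && (f == [set x; y])]
  && [forall x in p.1, forall y in p.1,
        connect (fun a b => [set a; b] \in p.2) x y].

Definition conn_sub (A : {set T}) : {set subgraph} :=
  [set p : subgraph | conn_subgraph p && (A \subset p.1)].

(* Steiner distance: min number of edges of a connected subgraph containing A;
   the default #|{set T}| bounds every #|F|, so it never affects the minimum
   when conn_sub A is nonempty *)
Definition steiner_dist (A : {set T}) : nat :=
  \big[minn/#|[set: {set T}]|]_(p in conn_sub A) #|p.2|.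

Definition steiner_trees (A : {set T}) : {set subgraph} :=
  [set p in conn_sub A | #|p.2| == steiner_dist A].

Definition sigma (A : {set T}) : nat := #|steiner_trees A|.

Definition sigma_v (A : {set T}) (v : T) : nat :=
  #|[set p in steiner_trees A | (v \in p.1) && (v \notin A)]|.

Definition SW (k : nat) : nat :=
  \sum_(A : {set T} | #|A| == k) steiner_dist A.

Definition betweenness (k : nat) (v : T) : rat :=
  \sum_(A : {set T} | (v \notin A) && (#|A| == k))
     ((sigma_v A v)%:R / (sigma A)%:R)%R.

End BlockGraphs.

(* Main.v *)
Require Import Defs.
From mathcomp Require Import all_boot all_order all_algebra zify.
Set Implicit Arguments. Unset Strict Implicit. Unset Printing Implicit Defensive.

Fixpoint reachset (T : finType) (r : rel T) (root : T) (n : nat) : {set T} :=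
  if n is n'.+1 then reachset r root n' :|: [set y | [exists x in reachset r root n', r x y]]
  else [set root].

Lemma reach_path (T : finType) (r : rel T) root s :
  path r root s -> last root s \in reachset r root (size s).
Proof.
elim/last_ind: s => [|s y IH]; first by rewrite /= set11.
rewrite rcons_path last_rcons size_rcons => /andP[/IH Hs Hy] /=.
apply/setUP; right; rewrite inE; apply/existsP; exists (last root s).
by rewrite Hs.
Qed.

Lemma bfs (T : finType) (r : rel T) (W : {set T}) (root : T) :
  root \in W -> (forall x y, r x y -> x \in W) ->
  (forall w, w \in W -> connect r root w) ->
  exists par : T -> T, exists h : T -> nat,
    forall w, w \in W -> w != root -> [/\ r (par w) w, par w \in W & h (par w) < h w].
Proof.
move=> rW rWx conW.
have exQ w : exists n, (w \in reachset r root n) || (w \notin W).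
  case: (boolP (w \in W)) => wW; last by exists 0; rewrite orbT.
  case/connectP: (conW w wW) => s ps ->; exists (size s).
  by rewrite reach_path.
pose h w := ex_minn (exQ w).
have hP w : (w \in reachset r root (h w)) || (w \notin W).
  by rewrite /h; case: (ex_minnP (exQ w)).
have hmin w m : (w \in reachset r root m) || (w \notin W) -> h w <= m.
  by rewrite /h; case: (ex_minnP (exQ w)) => n _; apply.
pose par w := odflt w [pick x | (x \in reachset r root (h w).-1) && r x w].
exists par, h => w wW nwr.
have := hP w; rewrite wW orbF => wR.
have hw0 : h w != 0.
  apply/eqP => h0; move: wR; rewrite h0 /= inE.
  by rewrite (negbTE nwr).
rewrite /par; case: pickP => [x /andP[xR rxw]|none].
- have xW := rWx _ _ rxw.
  split => //.
  apply: (@leq_ltn_trans (h w).-1); first by apply: hmin; rewrite xR.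
  by case: (h w) hw0.
- exfalso.
  move: wR hw0 (hmin w (h w).-1) none.
  case: (h w) => [|n] //= wR _ mn none.
  case/setUP: wR => [H|].
    by have := mn; rewrite H /= => /(_ isT); rewrite ltnn.
  rewrite inE => /existsP[x /andP[xR rxw]].
  by have := none x; rewrite xR rxw.
Qed.

Lemma set2_mem (T : finType) (a b x : T) : x \in [set a; b] -> x = a \/ x = b.
Proof. by rewrite !inE => /orP[/eqP|/eqP]; auto. Qed.

Lemma lower_bound (T : finType) (W : {set T}) (F : {set {set T}}) root :
  root \in W -> (forall a b, [set a; b] \in F -> a \in W) ->
  (forall w, w \in W -> connect (fun a b => [set a; b] \in F) root w) ->
  #|W| <= #|F|.+1.
Proof.
move=> rW FW con.
have [par [h Hp]] := bfs (r := fun a b => [set a; b] \in F) rW FW con.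
rewrite (cardsD1 root W) rW add1n ltnS.
have inj : {in W :\ root &, injective (fun w => [set w; par w])}.
  move=> w1 w2; rewrite !inE => /andP[n1 W1] /andP[n2 W2] eq12.
  have [_ _ h1] := Hp _ W1 n1; have [_ _ h2] := Hp _ W2 n2.
  have : w1 \in [set w2; par w2] by rewrite -eq12 set21.
  case/set2_mem => // E1.
  have : w2 \in [set w1; par w1] by rewrite eq12 set21.
  case/set2_mem => // E2.
  by rewrite -E1 in h2; rewrite -E2 in h1; move: (ltn_trans h2 h1); rewrite ltnn.
rewrite -(card_in_imset inj); apply: subset_leq_card.
apply/subsetP => f /imsetP[w]; rewrite !inE => /andP[nw Ww] ->.
by have [Hr _ _] := Hp _ Ww nw; rewrite setUC.
Qed.

Lemma upper_bound (T : finType) (e : rel T) (W : {set T}) root :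
  root \in W ->
  (forall w, w \in W -> connect [rel a b | e a b && (a \in W) && (b \in W)] root w) ->
  exists F, conn_subgraph e (W, F) && (#|F| < #|W|).
Proof.
move=> rW con.
have rWx : forall x y, [rel a b | e a b && (a \in W) && (b \in W)] x y -> x \in W.
  by move=> x y /= /andP[/andP[]].
have [par [h Hp]] := bfs rW rWx con.
pose F := [set [set w; par w] | w in W :\ root].
exists F; apply/andP; split; last first.
  apply: (leq_ltn_trans (leq_imset_card _ _)).
  by rewrite (cardsD1 root W) rW.
apply/andP; split.
  apply/forallP => f; apply/implyP => /imsetP[w]; rewrite !inE => /andP[nw Ww] ->.
  have [/= /andP[/andP[ep pW] _] _ _] := Hp _ Ww nw.
  apply/existsP; exists (par w); rewrite pW /=; apply/existsP; exists w.
  by rewrite Ww ep setUC eqxx.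
have toroot : forall n w, h w <= n -> w \in W ->
    connect (fun a b => [set a; b] \in F) w root.
  elim => [|n IH] w hn Ww; case: (eqVneq w root) => [->|nw]; rewrite ?connect0 //.
    by have [_ _] := Hp _ Ww nw; rewrite ltnNge (leq_trans hn).
  have [_ pW hp] := Hp _ Ww nw.
  apply: (connect_trans (y := par w)).
    by apply: connect1; apply: imset_f; rewrite !inE nw Ww.
  by apply: IH => //; rewrite -ltnS (leq_trans hp).
have sym : symmetric (fun a b : T => [set a; b] \in F) by move=> a b; rewrite setUC.
apply/forallP => x; apply/implyP => Wx; apply/forallP => y; apply/implyP => Wy.
apply: (connect_trans (y := root)); first exact: (toroot _ _ (leqnn _) Wx).
by rewrite sym_connect_sym //; exact: (toroot _ _ (leqnn _) Wy).
Qed.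

Definition ev (T : finType) (e : rel T) (z : T) := [rel a b | e a b && (a != z) && (b != z)].
Definition sep (T : finType) (e : rel T) (z x y : T) :=
  [&& x != z, y != z & ~~ connect (ev e z) x y].
Definition ind (T : finType) (e : rel T) (S : {set T}) :=
  [rel a b | e a b && (a \in S) && (b \in S)].

Lemma conn_sym_path (T : finType) (r : rel T) b s x y :
  symmetric r -> path r b s -> x \in b :: s -> y \in b :: s -> connect r x y.
Proof.
move=> sr pb xin yin; apply: (connect_trans (y := b)).
  by rewrite sym_connect_sym //; exact: path_connect pb _ xin.
exact: path_connect pb _ yin.
Qed.

Lemma ind_sym (T : finType) (e : rel T) S : symmetric e -> symmetric (ind e S).
Proof. by move=> se a b /=; rewrite se andbAC -andbA andbCA andbA. Qed.

Lemma ev_sym (T : finType) (e : rel T) z : symmetric e -> symmetric (ev e z).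
Proof. by move=> se a b /=; rewrite se andbAC. Qed.

Lemma path_ind (T : finType) (e : rel T) (S : {set T}) x s :
  path e x s -> all (mem S) (x :: s) -> path (ind e S) x s.
Proof.
move=> p a; apply: (sub_in_path (P := mem S) _ a p).
by move=> u v uS vS /= ->; rewrite uS vS.
Qed.

Lemma path_avoid (T : finType) (e : rel T) z x s :
  path e x s -> z \notin x :: s -> path (ev e z) x s.
Proof.
elim: s x => //= y s IH x /andP[exy ps]; rewrite in_cons negb_or => /andP[nx nys].
move: nys; rewrite in_cons negb_or => /andP[ny ns].
rewrite eq_sym in nx; rewrite eq_sym in ny.
rewrite exy nx ny /=; apply: IH => //.
by rewrite in_cons negb_or eq_sym ny.
Qed.

Lemma path_ev_avoid (T : finType) (e : rel T) z x s :
  x != z -> path (ev e z) x s -> z \notin x :: s.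
Proof.
elim: s x => [|y s IH] x nx /=; first by rewrite in_cons in_nil orbF eq_sym.
case/andP => /andP[/andP[_ _] ny] ps.
rewrite in_cons negb_or eq_sym nx /=; exact: IH.
Qed.

Lemma local_clique (T : finType) (e : rel T) a z c :
  simple_graph e -> block_graph e ->
  e a z -> e z c -> a != c -> connect (ev e z) a c -> e a c.
Proof.
move=> [se ie] bg eaz ezc nac /connectP[q pq lq].
case: (shortenP pq) lq => q' pq' uq' _ lq'.
have naz : a != z by apply/eqP => E; move: eaz; rewrite E ie.
have zq := path_ev_avoid naz pq'.
pose cyc := z :: a :: q'.
pose S := [set u in cyc].
have ucyc : uniq cyc by rewrite /cyc /= zq.
have pe : path e a q' by apply: sub_path pq' => u v /= /andP[/andP[]].
have ccyc : cycle e cyc.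
  by rewrite /cyc /= rcons_path /= (se z a) eaz pe -lq' (se c z) ezc.
have cind : forall X : {set T}, forall s, cycle e s -> {subset s <= X} -> cycle (ind e X) s.
  move=> X [|u s] //= cs sX; apply: path_ind => //.
  apply/allP => w win; apply: sX.
  by move: win; rewrite in_cons mem_rcons in_cons orbA orbb.
have PS : conn_in e S && no_cut_in e S.
  apply/andP; split.
    apply/forallP => x; apply/implyP => xS; apply/forallP => y; apply/implyP => yS.
    apply: (connect_cycle (cind S cyc ccyc _)); rewrite -?(inE (mem cyc)) //.
    by move=> u uc; rewrite inE.
    by move: xS; rewrite inE.
    by move: yS; rewrite inE.
  apply/forallP => v; apply/implyP; rewrite inE => vc.
  case: (rot_to vc) => i s' Er.
  have cs : cycle e (v :: s') by rewrite -Er rot_cycle.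
  have us : uniq (v :: s') by rewrite -Er rot_uniq.
  have memS : forall u, (u \in S :\ v) = (u \in s').
    move=> u; rewrite in_setD1 in_set -(mem_rot i) Er in_cons.
    case: (eqVneq u v) => [->|] //=; by move: us => /= /andP[/negbTE ->].
  apply/forallP => x; apply/implyP; rewrite memS => xs; apply/forallP => y; apply/implyP; rewrite memS => ys.
  move: cs; rewrite /= rcons_path => /andP[pvs _].
  case: s' memS xs ys pvs {Er us} => // b s'' memS xs ys /= /andP[_ pbs].
  apply: (conn_sym_path (ind_sym _ se) (path_ind pbs _) xs ys).
  by apply/allP => u; rewrite -memS.
have [B mB SB] := maxset_exists (P := fun S0 : {set T} => conn_in e S0 && no_cut_in e S0) PS.
have cB := bg B mB.
move/forallP: cB => /(_ a) /implyP; rewrite (subsetP SB) ?inE ?eqxx ?orbT // => /(_ isT) /forallP /(_ c) /implyP.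
rewrite (subsetP SB); first by rewrite nac => /(_ isT).
by rewrite inE lq' in_cons mem_last orbT.
Qed.

Lemma key_path (T : finType) (e : rel T) :
  simple_graph e -> block_graph e -> graph_connected e -> forall x y,
  exists p, [/\ path e x p, last x p = y & forall z, z \in p -> z != y -> sep e z x y].
Proof.
move=> sg bg gc x y; have [se ie] := sg.
pose P n := [exists t : n.-tuple T, path e x t && (last x t == y)].
have exP : exists n, P n.
  case/connectP: (gc x y) => s ps ls; exists (size s); apply/existsP; exists (in_tuple s).
  by rewrite /= ps -ls eqxx.
have [n Pn minn] := ex_minnP exP.
have minp : forall s, path e x s -> last x s = y -> n <= size s.
  move=> s ps ls; apply: minn; apply/existsP; exists (in_tuple s); by rewrite /= ps ls eqxx.
case/existsP: Pn => t /andP[pt /eqP lt].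
case: (shortenP pt) lt => p' pp' up' sub' lp'.
have sz' : size p' <= n.
  rewrite -(size_tuple t); apply: uniq_leq_size => //; by case/andP: up'.
exists p'; split => // z zp nzy.
move: pp' up' lp' sz'; case/splitPr: zp => p1 p2.
case: p2 => [|c p3].
  by rewrite last_cat /= => _ _ E; move: nzy; rewrite E eqxx.
rewrite cat_path => /andP[pp1 H] up; move: H => /= /and3P[eaz ezc pp3].
rewrite last_cat /= => ly sz.
move: up; rewrite -cat_cons cat_uniq => /and3P[_ hs up2].
have zn1 : z \notin x :: p1 by apply: contra hs => H; rewrite /= H.
have cn1 : c \notin x :: p1 by apply: contra hs => H; rewrite /= H orbT.
have zn3 : z \notin c :: p3 by case/andP: up2.
pose a := last x p1.
have nac : a != c by apply: contraNneq cn1 => <-; exact: mem_last.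
have neac : ~~ e a c.
  apply/negP => eac.
  have := minp (p1 ++ c :: p3); rewrite cat_path /= pp1 eac pp3 last_cat /= => /(_ isT ly).
  by move=> /(leq_trans sz); rewrite !size_cat /= !addnS ltnS ltnn.
have ncac : ~~ connect (ev e z) a c.
  by apply: contra neac; apply: local_clique.
apply/and3P; split.
- by move: zn1; rewrite in_cons negb_or eq_sym => /andP[].
- by rewrite eq_sym.
apply: contra ncac => cxy.
have sev := ev_sym z se.
have c1 : connect (ev e z) a x.
  rewrite sym_connect_sym //; apply: (path_connect (path_avoid pp1 zn1)); exact: mem_last.
have c2 : connect (ev e z) y c.
  rewrite sym_connect_sym // -ly; apply: (path_connect (path_avoid pp3 zn3)); exact: mem_last.
exact: connect_trans (connect_trans c1 cxy) c2.
Qed.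

Definition Cset (T : finType) (e : rel T) (A : {set T}) :=
  [set z | (z \in A) || [exists x in A, exists y in A, sep e z x y]].

Lemma sep_on_path (T : finType) (e : rel T) z x y p :
  sep e z x y -> path e x p -> last x p = y -> z \in x :: p.
Proof.
move=> /and3P[_ _ nc] pp lp; apply/negPn/negP => zn.
move/negP: nc; apply; rewrite -lp.
exact: path_connect (path_avoid pp zn) _ (mem_last _ _).
Qed.

Lemma A_sub_C (T : finType) (e : rel T) (A : {set T}) : A \subset Cset e A.
Proof. by apply/subsetP => z zA; rewrite inE zA. Qed.

Lemma A_conn_C (T : finType) (e : rel T) (A : {set T}) x y :
  simple_graph e -> block_graph e -> graph_connected e ->
  x \in A -> y \in A -> exists p, [/\ path (ind e (Cset e A)) x p, last x p = y &
     {subset x :: p <= Cset e A}].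
Proof.
move=> sg bg gc xA yA.
have [p [pp lp H]] := key_path sg bg gc x y.
have sub : {subset x :: p <= Cset e A}.
  move=> z; rewrite in_cons => /orP[/eqP ->|zp]; first by rewrite inE xA.
  case: (eqVneq z y) => [->|nzy]; first by rewrite inE yA.
  rewrite inE; apply/orP; right; apply/existsP; exists x; rewrite xA /=.
  by apply/existsP; exists y; rewrite yA /= H.
exists p; split => //; apply: path_ind => //; by apply/allP.
Qed.

Lemma C_conn (T : finType) (e : rel T) (A : {set T}) x0 :
  simple_graph e -> block_graph e -> graph_connected e -> x0 \in A ->
  forall u, u \in Cset e A -> connect (ind e (Cset e A)) x0 u.
Proof.
move=> sg bg gc x0A.
have [se _] := sg.
have symi := ind_sym (Cset e A) se.
have hA : forall u, u \in A -> connect (ind e (Cset e A)) x0 u.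
  move=> u uA; have [p [pp lp _]] := A_conn_C sg bg gc x0A uA.
  by rewrite -lp; exact: path_connect pp _ (mem_last _ _).
move=> u; rewrite inE => /orP[/hA //|/existsP[x /andP[xA /existsP[y /andP[yA sp]]]]].
have [p [pp lp _]] := A_conn_C sg bg gc xA yA.
have pe : path e x p by apply: sub_path pp => a b /= /andP[/andP[]].
have := sep_on_path sp pe lp => up.
exact: connect_trans (hA x xA) (path_connect pp up).
Qed.

Lemma edge_in (T : finType) (e : rel T) (p : subgraph T) a b :
  simple_graph e -> conn_subgraph e p -> [set a; b] \in p.2 ->
  [/\ a \in p.1, b \in p.1 & e a b].
Proof.
move=> [se ie] /andP[/forallP /(_ [set a; b]) H _] ab.
move/implyP: H => /(_ ab) /existsP[u /andP[uW /existsP[v /andP[vW /andP[euv /eqP E]]]]].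
have aE : a \in [set u; v] by rewrite -E set21.
have bE : b \in [set u; v] by rewrite -E set22.
have nuv : u != v by apply/eqP => E'; move: euv; rewrite E' ie.
have inW : forall w, w \in [set u; v] -> w \in p.1.
  by move=> w /set2_mem [->|->].
split; try exact: inW.
have ua : u \in [set a; b] by rewrite E set21.
have va : v \in [set a; b] by rewrite E set22.
case/set2_mem: aE => Ea; case/set2_mem: bE => Eb; subst.
- by case/set2_mem: va => E'; move: nuv; rewrite E' eqxx.
- done.
- by rewrite se.
- by case/set2_mem: ua => E'; move: nuv; rewrite E' eqxx.
Qed.

Lemma C_sub_W (T : finType) (e : rel T) (A : {set T}) p :
  simple_graph e -> p \in conn_sub e A -> Cset e A \subset p.1.
Proof.
move=> sg; rewrite inE => /andP[cs AW].
apply/subsetP => z; rewrite inE => /orP[/(subsetP AW) //|].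
case/existsP=> x /andP[xA /existsP[y /andP[yA /and3P[_ _ nc]]]].
apply/negPn/negP => zW; move/negP: nc; apply.
have xW := subsetP AW _ xA; have yW := subsetP AW _ yA.
move: (cs) => /andP[_ /forallP /(_ x) /implyP /(_ xW) /forallP /(_ y) /implyP /(_ yW)].
apply: connect_sub => a b ab; apply: connect1.
have [aW bW eab] := edge_in sg cs ab.
have az : a != z by apply: (contraNneq _ zW) => <-.
have bz : b != z by apply: (contraNneq _ zW) => <-.
by rewrite /= eab az bz.
Qed.

Lemma W_le_F (T : finType) (e : rel T) (A : {set T}) p x0 :
  simple_graph e -> x0 \in A -> p \in conn_sub e A -> #|p.1| <= #|p.2|.+1.
Proof.
move=> sg x0A; rewrite inE => /andP[cs AW].
have x0W := subsetP AW _ x0A.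
apply: (lower_bound x0W).
  by move=> a b ab; case: (edge_in sg cs ab).
move=> w wW; move: (cs) => /andP[_ /forallP /(_ x0) /implyP /(_ x0W) /forallP /(_ w) /implyP /(_ wW)].
done.
Qed.

Lemma exists_tree (T : finType) (e : rel T) (A : {set T}) x0 :
  simple_graph e -> block_graph e -> graph_connected e -> x0 \in A ->
  exists F, ((Cset e A, F) \in conn_sub e A) && (#|F| < #|Cset e A|).
Proof.
move=> sg bg gc x0A.
have x0C : x0 \in Cset e A by rewrite inE x0A.
have [F /andP[cs lt]] := upper_bound x0C (C_conn sg bg gc x0A).
by exists F; rewrite inE cs A_sub_C lt.
Qed.

Lemma bigmin_le (I : eqType) (r : seq I) (P : pred I) (F : I -> nat) x j :
  j \in r -> P j -> \big[minn/x]_(i <- r | P i) F i <= F j.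
Proof.
elim: r => //= i r IH; rewrite in_cons big_cons => /orP[/eqP <-|jr] Pj.
  by rewrite Pj geq_minl.
case: (P i); last exact: IH.
exact: leq_trans (geq_minr _ _) (IH jr Pj).
Qed.

Lemma steiner_dist_eq (T : finType) (e : rel T) (A : {set T}) x0 :
  simple_graph e -> block_graph e -> graph_connected e -> x0 \in A ->
  steiner_dist e A = #|Cset e A|.-1.
Proof.
move=> sg bg gc x0A.
have [F /andP[pin lt]] := exists_tree sg bg gc x0A.
apply/eqP; rewrite eqn_leq; apply/andP; split.
  apply: (leq_trans (bigmin_le _ _ (mem_index_enum (Cset e A, F)) pin)) => /=.
  by rewrite -ltnS (ltn_predK lt).
rewrite /steiner_dist; apply: (big_ind (fun m => #|Cset e A|.-1 <= m)).
- rewrite cardsT; apply: (leq_trans (leq_pred _)); apply: (leq_trans (max_card _)).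
  have := @leq_card T _ (@set1 T) (@set1_inj T); apply.
- by move=> m1 m2 h1 h2; rewrite leq_min h1 h2.
- move=> p pA; have := W_le_F sg x0A pA; have := subset_leq_card (C_sub_W sg pA).
  move=> h1 h2; rewrite -ltnS; apply: (leq_trans _ (leq_trans h1 h2)).
  by rewrite (ltn_predK lt).
Qed.

Lemma steiner_tree_W (T : finType) (e : rel T) (A : {set T}) x0 p :
  simple_graph e -> block_graph e -> graph_connected e -> x0 \in A ->
  p \in steiner_trees e A -> p.1 = Cset e A.
Proof.
move=> sg bg gc x0A; rewrite inE => /andP[pA /eqP sz].
have [F /andP[_ lt]] := exists_tree sg bg gc x0A.
move: sz; rewrite (steiner_dist_eq sg bg gc x0A) => sz.
apply/eqP; rewrite eq_sym eqEcard C_sub_W //=.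
have := W_le_F sg x0A pA; rewrite sz (ltn_predK lt); done.
Qed.

Lemma sigma_pos (T : finType) (e : rel T) (A : {set T}) x0 :
  simple_graph e -> block_graph e -> graph_connected e -> x0 \in A ->
  0 < sigma e A.
Proof.
move=> sg bg gc x0A.
have [F /andP[pin lt]] := exists_tree sg bg gc x0A.
apply/card_gt0P; exists (Cset e A, F); rewrite inE pin (steiner_dist_eq sg bg gc x0A) /=.
have e1 : #|Cset e A|.-1.+1 = #|Cset e A| := ltn_predK lt.
rewrite eqn_leq; apply/andP; split; first by rewrite -ltnS e1.
by rewrite -ltnS e1; exact: (W_le_F sg x0A pin).
Qed.

Lemma sigma_v_eq (T : finType) (e : rel T) (A : {set T}) x0 v :
  simple_graph e -> block_graph e -> graph_connected e -> x0 \in A ->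
  v \notin A -> sigma_v e A v = if v \in Cset e A then sigma e A else 0.
Proof.
move=> sg bg gc x0A vA; rewrite /sigma_v /sigma.
case: (boolP (v \in Cset e A)) => vC.
  apply: eq_card => p; rewrite in_set.
  case: (boolP (p \in steiner_trees e A)) => //= pS.
  by rewrite (steiner_tree_W sg bg gc x0A pS) vC vA.
apply/eqP; rewrite cards_eq0; apply/eqP/setP => p; rewrite in_set in_set0.
case: (boolP (p \in steiner_trees e A)) => //= pS.
by rewrite (steiner_tree_W sg bg gc x0A pS) (negbTE vC).
Qed.

Lemma C_cut (T : finType) (e : rel T) (A : {set T}) v :
  v \in Cset e A :\: A -> cut_vertex e v.
Proof.
rewrite in_setD inE => /andP[/negbTE -> /=] /existsP[x /andP[_ /existsP[y /andP[_ sp]]]].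
by apply/existsP; exists x; apply/existsP; exists y.
Qed.

Lemma betw_eq (T : finType) (e : rel T) (k : nat) v :
  simple_graph e -> block_graph e -> graph_connected e -> 0 < k ->
  betweenness e k v = ((\sum_(A : {set T} | #|A| == k) (v \in Cset e A :\: A : nat))%:R)%R.
Proof.
move=> sg bg gc k0; rewrite /betweenness GRing.natr_sum.
rewrite big_mkcond [in RHS]big_mkcond /=; apply: eq_bigr => A _.
case: (boolP (#|A| == k)) => [/eqP Ak|]; last by rewrite andbF.
have : 0 < #|A| by rewrite Ak.
case/card_gt0P => x0 x0A.
rewrite andbT in_setD; case: (boolP (v \in A)) => vA //=.
rewrite (sigma_v_eq sg bg gc x0A vA).
have sp := sigma_pos sg bg gc x0A.
case: (v \in Cset e A) => /=.
  by rewrite GRing.divff // Num.Theory.pnatr_eq0 -lt0n.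
by rewrite GRing.mul0r.
Qed.

Lemma sum_cut (T : finType) (e : rel T) (A : {set T}) :
  \sum_(v : T | cut_vertex e v) (v \in Cset e A :\: A : nat) = #|Cset e A :\: A|.
Proof.
rewrite -sum1_card big_mkcond [in RHS]big_mkcond /=; apply: eq_bigr => v _.
case: (boolP (v \in Cset e A :\: A)) => vX; first by rewrite (C_cut vX).
by case: (cut_vertex e v).
Qed.

Theorem mainTheorem5 (T : finType) (e : rel T) (k : nat) :
  simple_graph e -> graph_connected e -> block_graph e ->
  2 <= k <= #|T| ->
  ((SW e k)%:R : rat) =
    (\sum_(v : T | cut_vertex e v) betweenness e k v +
     ((k - 1) * 'C(#|T|, k))%:R)%R.
Proof.
move=> sg gc bg /andP[k2 _].
have k0 : 0 < k by apply: leq_trans k2.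
rewrite (eq_bigr _ (fun v _ => betw_eq v sg bg gc k0)) -GRing.natr_sum -GRing.natrD.
congr (GRing.natmul _ _).
rewrite exchange_big /= (eq_bigr _ (fun A _ => sum_cut e A)).
rewrite -(card_draws T k) mulnC.
have -> : #|[set A : {set T} | #|A| == k]| * (k - 1) = \sum_(A : {set T} | #|A| == k) (k - 1).
  by rewrite -sum_nat_const; apply: eq_bigl => A; rewrite inE.
rewrite -big_split /= /SW; apply: eq_bigr => A /eqP Ak.
have : 0 < #|A| by rewrite Ak.
case/card_gt0P => x0 x0A.
rewrite (steiner_dist_eq sg bg gc x0A).
have sub := A_sub_C e A.
have h1 : #|Cset e A :\: A| = #|Cset e A| - #|A|.
  by rewrite cardsD (setIidPr sub).
have h2 := subset_leq_card sub.
rewrite h1 -Ak; lia.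
Qed.
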